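(* The theory $\mathrm{IKP}$ does not prove $\mathrm{PlUb}$. Specifically, $1 \in \mathrm{PlOrd}$, yet $\mathrm{IKP}$ does not prove that the plump successor $1^{\mathrm{pl}+}$ exists as a set.
   Context: $\mathrm{IKP}$ is intuitionistic Kripke–Platek set theory (with strong infinity). An ordinal is a transitive set of transitive sets. For sets $\alpha,\gamma$, $\mathrm{relpl}_\alpha(\gamma)$ denotes $\forall \delta \in \gamma\ \forall \varepsilon \in \alpha\,(\varepsilon \subseteq \delta \rightarrow \varepsilon \in \gamma)$. $\mathrm{PlOrd}$ is the class of ordinals $\alpha$ such that for all $\beta \in \alpha$ and all $\gamma \subseteq \beta$ with $\mathrm{relpl}_\alpha(\gamma)$, we have $\gamma \in \alpha$ and $\forall \delta \in \alpha\,(\beta \in \delta \rightarrow \gamma \in \delta)$. For $\alpha \in \mathrm{PlOrd}$, the plump successor is $\alpha^{\mathrm{pl}+} = \{\beta \subseteq \alpha : \mathrm{relpl}_\alpha(\beta)\} = \mathcal{P}(\alpha) \cap \mathrm{PlOrd}$ (when this is a set). $\mathrm{PlUb}$ is the axiom $\forall \alpha \in \mathrm{PlOrd}\ \exists \beta \in \mathrm{PlOrd}\ \alpha \in \beta$. *)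

(* Defs.v *)
(* Deep embedding of intuitionistic first-order set theory (language {∈,=}),
   intuitionistic natural deduction, and the axioms of IKP (with strong
   infinity).  Variables are de Bruijn indices. *)
From Stdlib Require Import List.
Import ListNotations.

Inductive form : Type :=
| Mem : nat -> nat -> form          (* Mem x y  is  x ∈ y *)
| Eq  : nat -> nat -> form
| Bot : form
| And : form -> form -> form
| Or  : form -> form -> form
| Imp : form -> form -> form
| All : form -> form
| Ex  : form -> form.

Definition Neg (p : form) : form := Imp p Bot.
Definition Iff (p q : form) : form := And (Imp p q) (Imp q p).

(* renaming of free variables (terms are variables, so this is substitution) *)
Definition up (r : nat -> nat) : nat -> nat :=
  fun n => match n with 0 => 0 | S m => S (r m) end.

Fixpoint ren (r : nat -> nat) (p : form) : form :=
  match p with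
  | Mem x y => Mem (r x) (r y)
  | Eq x y => Eq (r x) (r y)
  | Bot => Bot
  | And a b => And (ren r a) (ren r b)
  | Or a b => Or (ren r a) (ren r b)
  | Imp a b => Imp (ren r a) (ren r b)
  | All a => All (ren (up r) a)
  | Ex a => Ex (ren (up r) a)
  end.

(* p[x/0] : substitute variable x for index 0 (and lower the others) *)
Definition inst (x : nat) (p : form) : form :=
  ren (fun n => match n with 0 => x | S m => m end) p.

Inductive prf : list form -> form -> Prop :=
| P_ax   G p : In p G -> prf G p
| P_botE G p : prf G Bot -> prf G p
| P_andI G p q : prf G p -> prf G q -> prf G (And p q)
| P_andE1 G p q : prf G (And p q) -> prf G p
| P_andE2 G p q : prf G (And p q) -> prf G q
| P_orI1 G p q : prf G p -> prf G (Or p q)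
| P_orI2 G p q : prf G q -> prf G (Or p q)
| P_orE G p q r : prf G (Or p q) -> prf (p :: G) r -> prf (q :: G) r -> prf G r
| P_impI G p q : prf (p :: G) q -> prf G (Imp p q)
| P_impE G p q : prf G (Imp p q) -> prf G p -> prf G q
| P_allI G p : prf (map (ren S) G) p -> prf G (All p)
| P_allE G p x : prf G (All p) -> prf G (inst x p)
| P_exI G p x : prf G (inst x p) -> prf G (Ex p)
| P_exE G p q : prf G (Ex p) -> prf (p :: map (ren S) G) (ren S q) -> prf G q
| P_refl G x : prf G (Eq x x)
| P_subst G p x y : prf G (Eq x y) -> prf G (inst x p) -> prf G (inst y p).

Definition Provable (T : form -> Prop) (p : form) : Prop :=
  exists G, (forall q, In q G -> T q) /\ prf G p.

(* Helpers: all index arguments are relative to the current context *)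
Definition BAll (a : nat) (p : form) : form := All (Imp (Mem 0 (S a)) p).
Definition BEx (a : nat) (p : form) : form := Ex (And (Mem 0 (S a)) p).
Definition Sub (a b : nat) : form := All (Imp (Mem 0 (S a)) (Mem 0 (S b))).

Inductive Delta0 : form -> Prop :=
| D_mem x y : Delta0 (Mem x y)
| D_eq x y : Delta0 (Eq x y)
| D_bot : Delta0 Bot
| D_and p q : Delta0 p -> Delta0 q -> Delta0 (And p q)
| D_or p q : Delta0 p -> Delta0 q -> Delta0 (Or p q)
| D_imp p q : Delta0 p -> Delta0 q -> Delta0 (Imp p q)
| D_ball a p : Delta0 p -> Delta0 (BAll a p)
| D_bex a p : Delta0 p -> Delta0 (BEx a p).

(* Ind(w): ∃e∈w (e empty) ∧ ∀x∈w ∃s∈w (x∈s ∧ x⊆s ∧ ∀z∈s (z∈x ∨ z=x)) *)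
Definition Ind (w : nat) : form :=
  And (BEx w (BAll 0 Bot))
      (BAll w (BEx (S w) (And (Mem 1 0) (And (Sub 1 0) (BAll 0 (Or (Mem 0 2) (Eq 0 2))))))).

Definition Ax_ext : form :=
  All (All (Imp (All (Iff (Mem 0 2) (Mem 0 1))) (Eq 1 0))).
Definition Ax_pair : form := All (All (Ex (And (Mem 2 0) (Mem 1 0)))).
Definition Ax_union : form := All (Ex (BAll 1 (BAll 0 (Mem 0 2)))).
(* strong infinity: there is a least inductive set *)
Definition Ax_inf : form := Ex (And (Ind 0) (All (Imp (Ind 0) (Sub 1 0)))).

(* Δ0-separation, p(x, params): index 0 = x, index k+1 = parameter k.
   ∀a ∃b ∀x (x∈b ↔ x∈a ∧ p) *)
Definition Ax_sep (p : form) : form :=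
  All (Ex (All (Iff (Mem 0 1) (And (Mem 0 2) (ren (up (fun n => n + 2)) p))))).

(* Δ0-collection, p(y, x, params): index 0 = y, 1 = x, k+2 = parameter k.
   ∀a (∀x∈a ∃y p → ∃b ∀x∈a ∃y∈b p) *)
Definition Ax_coll (p : form) : form :=
  All (Imp (All (Imp (Mem 0 1) (Ex (ren (fun n => if Nat.ltb n 2 then n else n + 1) p))))
           (Ex (All (Imp (Mem 0 2) (Ex (And (Mem 0 2)
                  (ren (fun n => if Nat.ltb n 2 then n else n + 2) p))))))).

(* set induction, p(a, params): index 0 = a, k+1 = parameter k.
   ∀a ((∀x∈a p(x)) → p(a)) → ∀a p(a) *)
Definition Ax_ind (p : form) : form :=
  Imp (All (Imp (All (Imp (Mem 0 1) (ren (up S) p))) p)) (All p).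

(* IKP; schema instances may contain free parameters (the axiom set is closed
   under renaming, so this is equivalent to taking universal closures) *)
Inductive IKP : form -> Prop :=
| IKP_ext : IKP Ax_ext
| IKP_pair : IKP Ax_pair
| IKP_union : IKP Ax_union
| IKP_inf : IKP Ax_inf
| IKP_sep p : Delta0 p -> IKP (Ax_sep p)
| IKP_coll p : Delta0 p -> IKP (Ax_coll p)
| IKP_setind p : IKP (Ax_ind p).

Definition Trans (a : nat) : form := BAll a (Sub 0 (S a)).
Definition Ord (a : nat) : form := And (Trans a) (BAll a (Trans 0)).
(* relpl_α(γ) := ∀δ∈γ ∀ε∈α (ε ⊆ δ → ε ∈ γ) *)
Definition relpl (al ga : nat) : form :=
  BAll ga (BAll (S al) (Imp (Sub 0 1) (Mem 0 (S (S ga))))).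
(* PlOrd(α) := Ord(α) ∧ ∀β∈α ∀γ (γ⊆β → relpl_α(γ) → γ∈α ∧ ∀δ∈α (β∈δ → γ∈δ)) *)
Definition PlOrd (al : nat) : form :=
  And (Ord al)
      (BAll al (All (Imp (Sub 0 1) (Imp (relpl (S (S al)) 0)
          (And (Mem 0 (S (S al))) (BAll (S (S al)) (Imp (Mem 2 0) (Mem 1 0)))))))).
(* o = 1 = {∅} :  ∀z (z∈o ↔ ∀w (w∈z → ⊥)) *)
Definition IsOne (o : nat) : form := All (Iff (Mem 0 (S o)) (All (Imp (Mem 0 1) Bot))).
(* y = α^{pl+} :  ∀β (β∈y ↔ β⊆α ∧ relpl_α(β)) *)
Definition IsPlSucc (al y : nat) : form :=
  All (Iff (Mem 0 (S y)) (And (Sub 0 (S al)) (relpl (S al) 0))).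

Definition One_exists : form := Ex (IsOne 0).
Definition One_PlOrd : form := All (Imp (IsOne 0) (PlOrd 0)).
Definition One_plsucc_exists : form := All (Imp (IsOne 0) (Ex (IsPlSucc 1 0))).
(* PlUb := ∀α ∈ PlOrd ∃β ∈ PlOrd (α ∈ β) *)
Definition PlUb : form := All (Imp (PlOrd 0) (Ex (And (PlOrd 0) (Mem 1 0)))).

(* Main.v *)
Require Import Defs.
From Stdlib Require Import List Arith Cantor ClassicalEpsilon.
Import ListNotations.

Definition W := option nat.
Definition le (u v : W) : Prop := u = None \/ u = v.
Lemma le_refl u : le u u. Proof. right; reflexivity. Qed.
Lemma le_trans u v t : le u v -> le v t -> le u t.
Proof. unfold le; intros [ -> | -> ] H; auto. Qed.
Lemma le_root v : le None v. Proof. left; reflexivity. Qed.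
#[local] Hint Resolve le_refl le_root : core.

Inductive V : Type := emp : V | sup : (nat -> V) -> (nat -> W -> Prop) -> V.
Definition elems (a : V) n := match a with emp => emp | sup f _ => f n end.
Definition vals (a : V) n w : Prop := match a with emp => False | sup _ p => p n w end.
Definition pc (p : nat -> W -> Prop) i v := exists u, le u v /\ p i u.
Lemma pc_mono p i v t : pc p i v -> le v t -> pc p i t.
Proof. intros [u [H1 H2]] H; exists u; split; auto; eapply le_trans; eauto. Qed.

Fixpoint eqV (a b : V) (w : W) {struct a} : Prop :=
 match a with
 | emp => forall j v, le w v -> pc (vals b) j v -> False
 | sup f p => (forall i v, le w v -> pc p i v -> exists j, pc (vals b) j v /\ eqV (f i) (elems b j) v) /\
              (forall j v, le w v -> pc (vals b) j v -> exists i, pc p i v /\ eqV (f i) (elems b j) v)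
 end.

Definition EQU a b w := (forall i v, le w v -> pc (vals a) i v -> exists j, pc (vals b) j v /\ eqV (elems a i) (elems b j) v) /\
   (forall j v, le w v -> pc (vals b) j v -> exists i, pc (vals a) i v /\ eqV (elems a i) (elems b j) v).

Lemma eqV_unfold a b w : eqV a b w <-> EQU a b w.
Proof.
  unfold EQU; destruct a as [|f p]; simpl.
  - split.
    + intros H; split.
      * intros i v _ [u [_ []]].
      * intros j v Hv Hp; exfalso; eapply H; eauto.
    + intros [_ H] j v Hv Hp. destruct (H j v Hv Hp) as [i [[u [_ []]] _]].
  - tauto.
Qed.

Lemma V_ind' (P : V -> Prop) :
  (forall a, (forall i, (exists u, vals a i u) -> P (elems a i)) -> P a) -> forall a, P a.
Proof.
  intros H a; induction a as [|f IH p].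
  - apply H; intros i [u []].
  - apply H; intros i _; apply IH.
Qed.

Lemma eqV_mono a b w v : eqV a b w -> le w v -> eqV a b v.
Proof.
  rewrite !eqV_unfold; intros [H1 H2] Hl; split; intros.
  - apply H1; auto; eapply le_trans; eauto.
  - apply H2; auto; eapply le_trans; eauto.
Qed.

Lemma eqV_refl a w : eqV a a w.
Proof.
  revert w; induction a as [a IH] using V_ind'; intro w.
  rewrite eqV_unfold; split; intros i v _ Hp; exists i; split; auto;
   apply IH; destruct Hp as [u [_ Hu]]; eauto.
Qed.

Lemma eqV_sym a b w : eqV a b w -> eqV b a w.
Proof.
  revert b w; induction a as [a IH] using V_ind'; intros b w.
  rewrite !eqV_unfold; intros [H1 H2]; split.
  - intros j v Hv Hp. destruct (H2 j v Hv Hp) as [i [Hi He]].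
    exists i; split; auto. apply IH; auto. destruct Hi as [u [_ Hu]]; eauto.
  - intros i v Hv Hp. destruct (H1 i v Hv Hp) as [j [Hj He]].
    exists j; split; auto. apply IH; auto. destruct Hp as [u [_ Hu]]; eauto.
Qed.

Lemma eqV_trans a b c w : eqV a b w -> eqV b c w -> eqV a c w.
Proof.
  revert b c w; induction a as [a IH] using V_ind'; intros b c w.
  rewrite !eqV_unfold; intros [H1 H2] [K1 K2]; split.
  - intros i v Hv Hp. destruct (H1 i v Hv Hp) as [j [Hj He]].
    destruct (K1 j v Hv Hj) as [k [Hk Hf]].
    exists k; split; auto. eapply IH; eauto. destruct Hp as [u [_ Hu]]; eauto.
  - intros k v Hv Hk. destruct (K2 k v Hv Hk) as [j [Hj He]].
    destruct (H2 j v Hv Hj) as [i [Hi Hf]].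
    exists i; split; auto. eapply IH; eauto. destruct Hi as [u [_ Hu]]; eauto.
Qed.

Definition memV x b w := exists j, pc (vals b) j w /\ eqV x (elems b j) w.

Lemma memV_mono x b w v : memV x b w -> le w v -> memV x b v.
Proof. intros [j [H1 H2]] Hl; exists j; split; [eapply pc_mono|eapply eqV_mono]; eauto. Qed.

Lemma memV_eq_l x x' b w : eqV x x' w -> memV x b w -> memV x' b w.
Proof. intros He [j [H1 H2]]; exists j; split; auto. eapply eqV_trans; eauto. apply eqV_sym; auto. Qed.

Lemma memV_eq_r x b b' w : eqV b b' w -> memV x b w -> memV x b' w.
Proof.
  intros He [j [H1 H2]]. rewrite eqV_unfold in He. destruct He as [K _].
  destruct (K j w (le_refl _) H1) as [k [Hk Hf]].
  exists k; split; auto. eapply eqV_trans; eauto.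
Qed.

Lemma memV_elem a i w : pc (vals a) i w -> memV (elems a i) a w.
Proof. intros H; exists i; split; auto; apply eqV_refl. Qed.

Lemma ext a b w : (forall v, le w v -> forall z, (memV z a v -> memV z b v) /\ (memV z b v -> memV z a v)) -> eqV a b w.
Proof.
  intros H; rewrite eqV_unfold; split.
  - intros i v Hv Hp. destruct (proj1 (H v Hv (elems a i)) (memV_elem _ _ _ Hp)) as [j [Hj Hf]].
    exists j; auto.
  - intros j v Hv Hp. destruct (proj2 (H v Hv (elems b j)) (memV_elem _ _ _ Hp)) as [i [Hi Hf]].
    exists i; split; auto. apply eqV_sym; auto.
Qed.

Lemma eq_mem a b w v z : eqV a b w -> le w v -> memV z a v -> memV z b v.
Proof. intros H Hl Hm; eapply memV_eq_r; eauto; eapply eqV_mono; eauto. Qed.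
#[local] Hint Resolve le_refl le_root : core.

Definition scons (d : V) (r : nat -> V) (n : nat) : V := match n with 0 => d | S m => r m end.

Fixpoint sat (w : W) (r : nat -> V) (p : form) : Prop :=
  match p with
  | Mem x y => memV (r x) (r y) w
  | Eq x y => eqV (r x) (r y) w
  | Bot => False
  | And a b => sat w r a /\ sat w r b
  | Or a b => sat w r a \/ sat w r b
  | Imp a b => forall v, le w v -> sat v r a -> sat v r b
  | All a => forall d, sat w (scons d r) a
  | Ex a => exists d, sat w (scons d r) a
  end.

Lemma sat_mono p : forall w v r, sat w r p -> le w v -> sat v r p.
Proof.
  induction p; simpl; intros w v r H Hl; eauto.
  - eapply memV_mono; eauto.
  - eapply eqV_mono; eauto.
  - destruct H; split; eauto.
  - destruct H; [left|right]; eauto.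
  - intros t Ht; apply H; eapply le_trans; eauto.
  - destruct H as [d Hd]; exists d; eauto.
Qed.

Lemma sat_ren p : forall w rho rho' s, (forall n, rho (s n) = rho' n) -> (sat w rho (ren s p) <-> sat w rho' p).
Proof.
  induction p; simpl; intros w rho rho' s Hs.
  - rewrite !Hs; tauto.
  - rewrite !Hs; tauto.
  - tauto.
  - rewrite (IHp1 w rho rho' s Hs), (IHp2 w rho rho' s Hs); tauto.
  - rewrite (IHp1 w rho rho' s Hs), (IHp2 w rho rho' s Hs); tauto.
  - split; intros H v Hv; [rewrite <- (IHp1 v rho rho' s Hs), <- (IHp2 v rho rho' s Hs)
                         |rewrite (IHp1 v rho rho' s Hs), (IHp2 v rho rho' s Hs)]; auto.
  - split; intros H d; specialize (H d);
      [rewrite <- (IHp w (scons d rho) (scons d rho') (up s))|rewrite (IHp w (scons d rho) (scons d rho') (up s))]; auto;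
      intros [|n]; simpl; auto.
  - split; intros [d H]; exists d;
      [rewrite <- (IHp w (scons d rho) (scons d rho') (up s))|rewrite (IHp w (scons d rho) (scons d rho') (up s))]; auto;
      intros [|n]; simpl; auto.
Qed.

Definition envEq (r r' : nat -> V) w := forall n, eqV (r n) (r' n) w.

Lemma envEq_sym r r' w : envEq r r' w -> envEq r' r w.
Proof. intros H n; apply eqV_sym; auto. Qed.
Lemma envEq_mono r r' w v : envEq r r' w -> le w v -> envEq r r' v.
Proof. intros H Hl n; eapply eqV_mono; eauto. Qed.
Lemma envEq_cons d r r' w : envEq r r' w -> envEq (scons d r) (scons d r') w.
Proof. intros H [|n]; simpl; auto; apply eqV_refl. Qed.

Lemma sat_eq p : forall w r r', envEq r r' w -> sat w r p -> sat w r' p.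
Proof.
  induction p; simpl; intros w r r' He H.
  - eapply memV_eq_r; [apply He|]. eapply memV_eq_l; [apply He|]. auto.
  - eapply eqV_trans; [apply eqV_sym, He|]. eapply eqV_trans; [apply H|apply He].
  - auto.
  - destruct H; split; eauto.
  - destruct H; [left|right]; eauto.
  - intros v Hv H1. eapply IHp2; [eapply envEq_mono; eauto|].
    apply H; auto. eapply IHp1; [|eauto]. apply envEq_sym; eapply envEq_mono; eauto.
  - intros d; eapply IHp; [apply envEq_cons; eauto|auto].
  - destruct H as [d Hd]; exists d; eapply IHp; [apply envEq_cons; eauto|auto].
Qed.

Lemma sat_inst w r x p : sat w r (inst x p) <-> sat w (scons (r x) r) p.
Proof. unfold inst; apply sat_ren; intros [|n]; reflexivity. Qed.

Lemma sat_renS w r d p : sat w (scons d r) (ren S p) <-> sat w r p.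
Proof. apply sat_ren; intros n; reflexivity. Qed.

Theorem soundness G p : prf G p -> forall w rh, (forall q, In q G -> sat w rh q) -> sat w rh p.
Proof.
  induction 1; intros w rh HG; simpl in *.
  - auto.
  - destruct (IHprf w rh HG).
  - split; auto.
  - apply (IHprf w rh HG).
  - apply (IHprf w rh HG).
  - left; auto.
  - right; auto.
  - destruct (IHprf1 w rh HG) as [H2|H2].
    + apply IHprf2; intros q' [<-|Hq]; auto.
    + apply IHprf3; intros q' [<-|Hq]; auto.
  - intros v Hv Hp. apply IHprf; intros q' [<-|Hq]; auto. eapply sat_mono; eauto.
  - apply (IHprf1 w rh HG); auto.
  - intros d. apply IHprf. intros q' Hq. apply in_map_iff in Hq. destruct Hq as [q0 [<- Hq0]].
    apply sat_renS; auto.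
  - apply sat_inst. apply (IHprf w rh HG).
  - exists (rh x). apply sat_inst, IHprf; auto.
  - destruct (IHprf1 w rh HG) as [d Hd].
    apply (sat_renS w rh d). apply IHprf2. intros q'' [<-|Hq]; auto.
    apply in_map_iff in Hq. destruct Hq as [q0 [<- Hq0]]. apply sat_renS; auto.
  - apply eqV_refl.
  - apply sat_inst. pose proof (IHprf2 w rh HG) as K. apply sat_inst in K.
    eapply sat_eq; [|exact K]. intros [|n]; simpl; [apply (IHprf1 w rh HG)|apply eqV_refl].
Qed.
#[local] Hint Resolve le_refl le_root : core.

Lemma mem_emp z v : ~ memV z emp v.
Proof. intros [j [[u [_ []]] _]]. Qed.

Lemma ax_ext w r : sat w r Ax_ext.
Proof.
  simpl. intros a b v Hv H. apply ext. intros t Ht z. destruct (H z) as [H1 H2]. split; auto.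
Qed.

Definition pairV x y := sup (fun n => match n with 0 => x | _ => y end) (fun _ _ => True).

Lemma ax_pair w r : sat w r Ax_pair.
Proof.
  simpl. intros x y. exists (pairV x y). split.
  - exists 0; split; [exists w; split; simpl; auto|apply eqV_refl].
  - exists 1; split; [exists w; split; simpl; auto|apply eqV_refl].
Qed.

Definition unionV a := sup (fun n => elems (elems a (fst (of_nat n))) (snd (of_nat n)))
   (fun n v => pc (vals a) (fst (of_nat n)) v /\ pc (vals (elems a (fst (of_nat n)))) (snd (of_nat n)) v).

Lemma ax_union w r : sat w r Ax_union.
Proof.
  simpl. intros a. exists (unionV a). intros x v Hv [j [Hj Hx]] z t Ht Hz.
  assert (Hz' : memV z (elems a j) t) by (eapply eq_mem; eauto).
  destruct Hz' as [k [Hk Hzk]].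
  exists (to_nat (j, k)). unfold pc, vals, elems, unionV. cbv beta iota. rewrite cancel_of_to. simpl. split; auto.
  exists t; split; auto. split; auto. eapply pc_mono; eauto.
Qed.

Lemma ren_sep_ok w x b a r p :
  sat w (scons x (scons b (scons a r))) (ren (up (fun n => n + 2)) p) <-> sat w (scons x r) p.
Proof.
  apply sat_ren. intros [|n]; simpl; auto. rewrite Nat.add_comm. reflexivity.
Qed.

Definition sepV a (P : V -> W -> Prop) := sup (elems a) (fun i v => pc (vals a) i v /\ P (elems a i) v).

Lemma ax_sep w r p : sat w r (Ax_sep p).
Proof.
  simpl. intros a. exists (sepV a (fun y v => sat v (scons y r) p)). intros x. split.
  - intros v Hv [j [[u [Hu [Hj HP]]] He]]. simpl in He. split.
    + exists j; split; auto. eapply pc_mono; eauto.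
    + apply ren_sep_ok. eapply sat_eq; [|eapply sat_mono; eauto].
      intros [|n]; simpl; [apply eqV_sym; auto|apply eqV_refl].
  - intros v Hv [[j [Hj He]] HP]. apply ren_sep_ok in HP.
    exists j; split; auto. exists v; split; auto. split; auto.
    eapply sat_eq; [|exact HP]. intros [|n]; simpl; [auto|apply eqV_refl].
Qed.

Definition wOf k : W := match k with 0 => None | S k => Some k end.
Definition code (w : W) := match w with None => 0 | Some k => S k end.
Lemma wOf_code w : wOf (code w) = w. Proof. destruct w; reflexivity. Qed.

Lemma ax_coll w r p : sat w r (Ax_coll p).
Proof.
  simpl. intros a v Hv Hc.
  assert (R1 : forall t y x, sat t (scons y (scons x (scons a r))) (ren (fun n => if Nat.ltb n 2 then n else n + 1) p) <-> sat t (scons y (scons x r)) p).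
  { intros; apply sat_ren. intros [|[|n]]; simpl; auto. rewrite Nat.add_1_r. reflexivity. }
  assert (R2 : forall t y x b, sat t (scons y (scons x (scons b (scons a r)))) (ren (fun n => if Nat.ltb n 2 then n else n + 2) p) <-> sat t (scons y (scons x r)) p).
  { intros; apply sat_ren. intros [|[|n]]; simpl; auto. rewrite Nat.add_comm. reflexivity. }
  set (ch := fun n => epsilon (inhabits emp) (fun y => sat (wOf (snd (of_nat n))) (scons y (scons (elems a (fst (of_nat n))) r)) p)).
  exists (sup ch (fun n u => u = wOf (snd (of_nat n)) /\ le v u /\ pc (vals a) (fst (of_nat n)) u)).
  intros x t Ht [j [Hj Hx]].
  destruct (Hc (elems a j) t Ht (memV_elem _ _ _ Hj)) as [y Hy]. apply R1 in Hy.
  set (n := to_nat (j, code t)).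
  assert (Hn : of_nat n = (j, code t)) by apply cancel_of_to.
  assert (Hs : sat t (scons (ch n) (scons (elems a j) r)) p).
  { unfold ch. rewrite Hn. cbn [fst snd]. pose proof (epsilon_spec (inhabits emp) (fun y => sat (wOf (code t)) (scons y (scons (elems a j) r)) p)) as E. clear -E Hy. destruct t as [k|]; apply E; exists y; exact Hy. }
  exists (ch n). split.
  - exists n. split; [|apply eqV_refl]. exists t. split; auto. simpl. rewrite Hn. simpl. rewrite wOf_code. auto.
  - apply R2. eapply sat_eq; [|exact Hs]. intros [|[|m]]; simpl; try apply eqV_refl. apply eqV_sym; auto.
Qed.

Lemma ax_ind w r p : sat w r (Ax_ind p).
Proof.
  simpl. intros v Hv H.
  assert (R : forall s x a, sat s (scons x (scons a r)) (ren (up S) p) <-> sat s (scons x r) p).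
  { intros; apply sat_ren. intros [|n]; reflexivity. }
  assert (K : forall a t, le v t -> sat t (scons a r) p).
  { intros a; induction a as [a IH] using V_ind'. intros t Ht. apply H; auto.
    intros x s Hs [j [Hj Hx]]. apply R.
    assert (Hex : exists u, vals a j u) by (destruct Hj as [u [_ Hu]]; eauto).
    eapply sat_eq; [|apply (IH j Hex s)]. intros [|n]; simpl; [apply eqV_sym; auto|apply eqV_refl].
    eapply le_trans; eauto. }
  intros a; apply K; auto.
Qed.

Definition succV x := sup (fun n => match n with 0 => x | S k => elems x k end)
   (fun n v => match n with 0 => True | S k => vals x k v end).

Lemma mem_succ z x v : memV z (succV x) v <-> eqV z x v \/ memV z x v.
Proof.
  split.
  - intros [[|j] [Hj He]]; simpl in He; [left; auto|right].
    exists j; split; auto.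
  - intros [H|[j [Hj He]]].
    + exists 0; split; auto. exists v; split; simpl; auto.
    + exists (S j); split; auto.
Qed.

Fixpoint vn n := match n with 0 => emp | S k => succV (vn k) end.
Definition omegaV := sup vn (fun _ _ => True).

Lemma empty_eq e t : (forall z u, le t u -> memV z e u -> False) -> eqV e emp t.
Proof.
  intros H. apply ext. intros u Hu z. split; intros Hz; exfalso; [eapply H; eauto|eapply mem_emp; eauto].
Qed.

Lemma ax_inf w r : sat w r Ax_inf.
Proof.
  simpl. exists omegaV. split; [split|].
  - exists emp. split.
    + exists 0. split; [exists w; split; simpl; auto|apply eqV_refl].
    + intros z v _ Hz. eapply mem_emp; eauto.
  - intros x t Ht [n [_ Hn]]. simpl in Hn.
    exists (vn (S n)). split; [|split; [|split]].
    + exists (S n). split; [exists t; split; simpl; auto|apply eqV_refl].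
    + apply mem_succ. left; auto.
    + intros z u Hu Hz. simpl. apply mem_succ. right. eapply eq_mem; eauto.
    + intros z u Hu Hz. simpl in Hz. apply mem_succ in Hz. destruct Hz as [Hz|Hz].
      * right. eapply eqV_trans; [exact Hz|]. apply eqV_sym. eapply eqV_mono; eauto.
      * left. eapply eq_mem; eauto. apply eqV_sym; auto.
  - intros W0 v Hv [[e [He1 He2]] Hs] z t Ht [n [_ Hz]]. simpl in Hz.
    eapply memV_eq_l; [apply eqV_sym; exact Hz|].
    clear z Hz. induction n as [|n IH].
    + simpl. eapply memV_eq_l; [apply (empty_eq e t)|eapply memV_mono; eauto].
      intros z u Hu Hz. eapply He2; [|eauto]. eapply le_trans; eauto.
    + destruct (Hs (vn n) t Ht IH) as [s [Hs1 [Hs2 [Hs3 Hs4]]]].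
      eapply memV_eq_l; [|exact Hs1]. apply ext. intros u Hu z. simpl. rewrite mem_succ. split.
      * intros Hz. destruct (Hs4 z u Hu Hz) as [H|H]; auto.
      * intros [H|H].
        -- eapply memV_eq_l; [apply eqV_sym; exact H|]. eapply memV_mono; eauto.
        -- apply (Hs3 z u Hu H).
Qed.

Theorem ikp_valid q : IKP q -> forall w r, sat w r q.
Proof.
  destruct 1; intros w r.
  - apply ax_ext.
  - apply ax_pair.
  - apply ax_union.
  - apply ax_inf.
  - apply ax_sep.
  - apply ax_coll.
  - apply ax_ind.
Qed.

Theorem provable_sat p : Provable IKP p -> forall w r, sat w r p.
Proof.
  intros [G [HG Hp]] w r. eapply soundness; eauto. intros q Hq. apply ikp_valid; auto.
Qed.

Ltac hyp := apply P_ax; simpl; repeat (first [left; reflexivity | right]).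

Lemma L_one_empty G o x t : prf G (IsOne o) -> prf G (Mem x o) -> prf G (Mem t x) -> prf G Bot.
Proof.
  intros H1 H2 H3.
  pose proof (P_allE _ _ x H1) as K. cbn in K.
  pose proof (P_impE _ _ _ (P_andE1 _ _ _ K) H2) as K2.
  pose proof (P_allE _ _ t K2) as K3. cbn in K3.
  exact (P_impE _ _ _ K3 H3).
Qed.

Lemma L_one_intro G o x : prf G (IsOne o) -> prf G (All (Imp (Mem 0 (S x)) Bot)) -> prf G (Mem x o).
Proof.
  intros H1 H2.
  pose proof (P_allE _ _ x H1) as K. cbn in K.
  exact (P_impE _ _ _ (P_andE2 _ _ _ K) H2).
Qed.

Lemma deriv_one_plord : prf [] One_PlOrd.
Proof.
  unfold One_PlOrd. apply P_allI. simpl. apply P_impI.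
  unfold PlOrd, Ord, Trans, BAll, Sub, relpl. apply P_andI; [apply P_andI|].
  - apply P_allI; apply P_impI; apply P_allI; apply P_impI; apply P_botE.
    apply (L_one_empty _ 2 1 0); hyp.
  - apply P_allI; apply P_impI; apply P_allI; apply P_impI; apply P_allI; apply P_impI; apply P_botE.
    apply (L_one_empty _ 3 2 1); [hyp|hyp|]. hyp.
  - apply P_allI; apply P_impI; apply P_allI; apply P_impI; apply P_impI. apply P_andI.
    + apply L_one_intro; [hyp|]. apply P_allI; apply P_impI.
      apply (L_one_empty _ 3 2 0); [hyp|hyp|].
      apply (P_impE _ (Mem 0 1)); [apply (P_allE _ (Imp (Mem 0 2) (Mem 0 3)) 0); hyp|hyp].
    + apply P_allI; apply P_impI; apply P_impI; apply P_botE.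
      apply (L_one_empty _ 3 0 2); hyp.
Qed.

Lemma L_ext G x y : prf G Ax_ext -> prf G (All (Iff (Mem 0 (S x)) (Mem 0 (S y)))) -> prf G (Eq x y).
Proof.
  intros H H2. pose proof (P_allE _ _ x H) as K. cbn in K.
  pose proof (P_allE _ _ y K) as K2. cbn in K2. exact (P_impE _ _ _ K2 H2).
Qed.

Lemma L_empty G x t : prf G (All (Imp (Mem 0 (S x)) Bot)) -> prf G (Mem t x) -> prf G Bot.
Proof.
  intros H H2. pose proof (P_allE _ _ t H) as K. cbn in K. exact (P_impE _ _ _ K H2).
Qed.

Definition G0 := [Ax_inf; Ax_ext; Ax_sep (BAll 0 Bot)].

Lemma deriv_one_exists : prf G0 One_exists.
Proof.
  unfold One_exists, G0.
  apply (P_exE _ (And (Ind 0) (All (Imp (Ind 0) (Sub 1 0))))); [hyp|]. cbn.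
  apply (P_exE _ (And (Mem 0 1) (BAll 0 Bot))); [eapply P_andE1; eapply P_andE1; hyp|]. cbn.
  apply (P_exE _ (All (Iff (Mem 0 1) (And (Mem 0 3) (All (Imp (Mem 0 1) Bot)))))).
  { apply (P_allE _ (Ex (All (Iff (Mem 0 1) (And (Mem 0 2) (All (Imp (Mem 0 1) Bot)))))) 1). hyp. }
  cbn. apply (P_exI _ _ 0). cbn. apply P_allI. cbn. apply P_andI.
  - apply P_impI.
    apply (P_andE2 _ (Mem 0 3)). apply (P_impE _ (Mem 0 1)); [|hyp].
    apply (P_andE1 _ _ (Imp (And (Mem 0 3) (All (Imp (Mem 0 1) Bot))) (Mem 0 1))).
    apply (P_allE _ (Iff (Mem 0 2) (And (Mem 0 4) (All (Imp (Mem 0 1) Bot)))) 0). hyp.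
  - apply P_impI.
    apply (P_impE _ (And (Mem 0 3) (All (Imp (Mem 0 1) Bot)))).
    + apply (P_andE2 _ (Imp (Mem 0 1) (And (Mem 0 3) (All (Imp (Mem 0 1) Bot))))).
      apply (P_allE _ (Iff (Mem 0 2) (And (Mem 0 4) (All (Imp (Mem 0 1) Bot)))) 0). hyp.
    + apply P_andI; [|hyp].
      apply (P_subst _ (Mem 0 4) 2 0).
      * apply L_ext; [hyp|]. apply P_allI. cbn. apply P_andI; apply P_impI; apply P_botE.
        -- apply (L_empty _ 3 0); [eapply P_andE2; hyp|hyp].
        -- apply (L_empty _ 1 0); hyp.
      * apply (P_andE1 _ _ (All (Imp (Mem 0 3) Bot))). hyp.
Qed.
#[local] Hint Resolve le_refl le_root : core.

Definition one := sup (fun _ => emp) (fun _ _ => True).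
Definition sv (S : nat -> Prop) (v : W) : Prop := match v with None => False | Some n => S n end.
Definition oneS (S : nat -> Prop) := sup (fun _ => emp) (fun _ v => sv S v).

Lemma mem_one z v : memV z one v <-> eqV z emp v.
Proof.
  split.
  - intros [j [_ H]]; exact H.
  - intros H; exists 0; split; auto. exists v; split; simpl; auto.
Qed.

Lemma sv_mono S v t : sv S v -> le v t -> sv S t.
Proof. intros H [->| <-]; [destruct H|exact H]. Qed.

Lemma mem_oneS z S v : memV z (oneS S) v <-> sv S v /\ eqV z emp v.
Proof.
  split.
  - intros [j [[u [Hu Hs]] H]]; split; [exact (sv_mono _ _ _ Hs Hu)|exact H].
  - intros [Hs H]; exists 0; split; auto. exists v; split; simpl; auto.
Qed.

Lemma isone_one w r : sat w (scons one r) (IsOne 0).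
Proof.
  unfold IsOne; simpl; intros z; split.
  - intros v _ Hz d v0 Hv0 Hd. apply mem_one in Hz. eapply mem_emp. eapply eq_mem; eauto.
  - intros v _ Hz. apply mem_one. apply empty_eq. intros d u Hu Hd. eapply Hz; eauto.
Qed.

Lemma sub_oneS P w r k : r k = one -> sat w (scons (oneS P) r) (Sub 0 (S k)).
Proof.
  intros Hk. unfold Sub; simpl. rewrite Hk. intros z v _ Hz. apply mem_oneS in Hz. apply mem_one; tauto.
Qed.

Lemma relpl_oneS S w r al : sat w (scons (oneS S) r) (relpl al 0).
Proof.
  unfold relpl, BAll, Sub; simpl. intros d v _ Hd e v' Hv' _ v'' Hv'' Hsub.
  apply mem_oneS in Hd. destruct Hd as [Hs Hd].
  apply mem_oneS. split.
  - eapply sv_mono; [eapply sv_mono; eauto|eauto].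
  - apply empty_eq. intros z u Hu Hz. eapply mem_emp. eapply eq_mem; [exact Hd| |apply (Hsub z u Hu Hz)].
    eapply le_trans; [eauto|eapply le_trans; eauto].
Qed.

Lemma diagonal y : (forall S, memV (oneS S) y None) -> False.
Proof.
  intros H. set (T := fun j n => memV emp (elems y j) (Some n)).
  destruct (H (fun n => ~ T n n)) as [j [_ Hj]].
  assert (K : forall n, (~ T n n) <-> T j n).
  { intros n; split.
    - intros Hn. unfold T. eapply eq_mem; [exact Hj|apply le_root|]. apply mem_oneS. split; [exact Hn|apply eqV_refl].
    - intros Hn. assert (M : memV emp (oneS (fun n => ~ T n n)) (Some n)).
      { eapply eq_mem; [apply eqV_sym; exact Hj|apply le_root|exact Hn]. }
      apply mem_oneS in M. exact (proj1 M). }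
  destruct (K j) as [K1 K2].
  assert (nT : ~ T j j) by (intros Ht; exact (K2 Ht Ht)).
  exact (nT (K1 nT)).
Qed.

Definition r0 : nat -> V := fun _ => emp.

Lemma prov_one_plord : Provable IKP One_PlOrd.
Proof. exists []; split; [intros q []|apply deriv_one_plord]. Qed.

Theorem proposition3p2 :
  Provable IKP One_exists /\ Provable IKP One_PlOrd /\
  ~ Provable IKP One_plsucc_exists /\ ~ Provable IKP PlUb.
Proof.
  split; [|split; [|split]].
  - exists G0. split; [|apply deriv_one_exists].
    intros q Hq. unfold G0 in Hq. simpl in Hq.
    destruct Hq as [<-|[<-|[<-|[]]]].
    + constructor.
    + constructor.
    + constructor. constructor. constructor.
  - apply prov_one_plord.
  - intros H. pose proof (provable_sat _ H None r0) as H0.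
    destruct (H0 one None (le_refl _) (isone_one _ _)) as [y Hy].
    apply (diagonal y). intros S.
    destruct (Hy (oneS S)) as [_ Hy2].
    apply (Hy2 None (le_refl _)). split.
    + apply (sub_oneS S None (scons y (scons one r0)) 1). reflexivity.
    + apply relpl_oneS.
  - intros H. pose proof (provable_sat _ H None r0) as H0.
    pose proof (provable_sat _ prov_one_plord None r0) as H1.
    destruct (H0 one None (le_refl _) (H1 one None (le_refl _) (isone_one _ _))) as [b [[_ Hp] Hm]].
    apply (diagonal b). intros S.
    exact (proj1 (Hp one None (le_refl _) Hm (oneS S) None (le_refl _)
             (sub_oneS S None (scons one (scons b (scons one r0))) 0 eq_refl)
             None (le_refl _) (relpl_oneS S None _ _))).
Qed.
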